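(* Let $N\ge3$ and $\sigma\in G_N$. Then $$\mathcal F\circ(\sigma\otimes\mathrm{id}_{\mathbb{Q}\langle\langle\widetilde X\rangle\rangle})=\Delta_\sigma\circ\mathcal F\qquad\text{and}\qquad\mathcal F\circ\widetilde\Delta_\sigma=(\sigma\otimes\mathrm{id}_{\mathbb{Q}\langle\langle X\rangle\rangle})\circ\mathcal F.$$
   Context: $\zeta_N=\exp(2\pi i/N)$, $\mu_N$ the complex $N$-th roots of unity, $\iota:\{1,\dots,N\}\to\mathbb{Z}/N\mathbb{Z}$ the residue-class bijection. $K\langle\langle\mathcal L\rangle\rangle$: noncommutative formal power series over $\mathcal L$. Alphabets $X=\{x_0\}\cup\{x_\zeta:\zeta\in\mu_N\}$, $\widetilde X=\{\tilde x\}\cup\{\tilde x_\alpha:\alpha\in\mathbb{Z}/N\mathbb{Z}\}$. $\mathcal F:\mathbb{Q}(\mu_N)\langle\langle\widetilde X\rangle\rangle\to\mathbb{Q}(\mu_N)\langle\langle X\rangle\rangle$ is the continuous $\mathbb{Q}(\mu_N)$-algebra isomorphism $\tilde x\mapsto x_0$, $\tilde x_\alpha\mapsto\sum_{m=1}^N\zeta_N^{-m\iota^{-1}(\alpha)}x_{\zeta_N^m}$. $G_N=\mathrm{Gal}(\mathbb{Q}(\mu_N)/\mathbb{Q})$; each $\sigma\in G_N$ has $\sigma(\zeta_N)=\zeta_N^k$ for a unique $k\in\{1,\dots,N-1\}$ coprime to $N$. $\sigma\otimes\mathrm{id}$ acts on a series by applying $\sigma$ to each coefficient: $\sum_wc_ww\mapsto\sum_w\sigma(c_w)w$.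 $\Delta_\sigma(\sum_wc_ww)=\sum_w\sigma(c_w)\delta_k(w)$ on $\mathbb{Q}(\mu_N)\langle\langle X\rangle\rangle$, where $\delta_k$ is the algebra automorphism $x_0\mapsto x_0$, $x_\zeta\mapsto x_{\zeta^k}$; $\widetilde\Delta_\sigma(\sum_wc_ww)=\sum_w\sigma(c_w)\tilde\delta_k(w)$ on $\mathbb{Q}(\mu_N)\langle\langle\widetilde X\rangle\rangle$, where $\tilde\delta_k$ is the algebra automorphism $\tilde x\mapsto\tilde x$, $\tilde x_\alpha\mapsto\tilde x_{\iota(k)\alpha}$. *)

(* Defs.v *)
From HB Require Import structures.
From mathcomp Require Import all_boot all_order all_algebra all_field.
Unset Printing Implicit Defensive.
Import GRing.Theory.
Local Open Scope ring_scope.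

(* Noncommutative formal power series over a finite alphabet A with
   coefficients in L: a coefficient for every word (seq A). *)
Definition series (L : fieldType) (A : finType) := seq A -> L.

(* The continuous map  sum_w c_w w  |->  sum_w f(c_w) Phi(w), where Phi is
   the algebra morphism sending each letter a to the linear combination
   sum_b M a b * b.  Since Phi(w) = Phi(w_1)...Phi(w_n) is homogeneous of
   degree n, the coefficient of a word v in the result is
   sum_{|w| = |v|} f(c_w) * prod_i M w_i v_i. *)
Definition subst_series (L : fieldType) (A B : finType) (f : L -> L)
  (M : A -> B -> L) (S : series L A) : series L B :=
  fun v => \sum_(w : (size v).-tuple A)
             f (S w) * \prod_(i < size v) M (tnth w i) (tnth (in_tuple v) i).

Definition letter_mx (A B : finType) (L : fieldType) (phi : A -> B) : A -> B -> L :=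
  fun a b => ((phi a == b) : nat)%:R.

(* Alphabet X = {x_0} u {x_zeta : zeta in mu_N}:  None = x_0,
   Some j = x_{z^j}  (j : 'Z_N, j |-> z^j is the bijection Z/NZ -> mu_N).
   Alphabet Xt = {xt} u {xt_alpha : alpha in Z/NZ}: None = xt, Some a = xt_a. *)
Definition letX (N : nat) := option 'Z_N.
Definition letXt (N : nat) := option 'Z_N.

Definition iota_inv (N : nat) (a : 'Z_N) : nat := if val a == 0%N then N else val a.

Definition F_mx (L : fieldType) (N : nat) (z : L) (a : letXt N) (b : letX N) : L :=
  match a with
  | None => ((b == None) : nat)%:R
  | Some al => \sum_(1 <= m < N.+1)
                 (z ^+ (m * iota_inv N al))^-1 * ((b == Some (m%:R : 'Z_N)) : nat)%:R
  end.

Definition Fmap (L : fieldType) (N : nat) (z : L) (S : series L (letXt N))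
  : series L (letX N) := subst_series L (letXt N) (letX N) id (F_mx L N z) S.

Definition coef_act (L : fieldType) (A : finType) (sigma : L -> L) (S : series L A)
  : series L A := fun w => sigma (S w).

(* delta_k : x_0 |-> x_0, x_zeta |-> x_{zeta^k}  (z^j |-> z^{jk}). *)
Definition delta_k (N k : nat) (a : letX N) : letX N :=
  match a with None => None | Some j => Some (k%:R * j) end.

Definition deltat_k (N k : nat) (a : letXt N) : letXt N :=
  match a with None => None | Some al => Some (k%:R * al) end.

Definition Delta (L : fieldType) (N k : nat) (sigma : L -> L) (S : series L (letX N))
  : series L (letX N) := subst_series L (letX N) (letX N) sigma (letter_mx _ _ L (delta_k N k)) S.

Definition Deltat (L : fieldType) (N k : nat) (sigma : L -> L) (S : series L (letXt N))
  : series L (letXt N) := subst_series L (letXt N) (letXt N) sigma (letter_mx _ _ L (deltat_k N k)) S.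

Arguments Fmap {L N} z S _.
Arguments Delta {L} N k sigma S _.
Arguments Deltat {L} N k sigma S _.
Arguments coef_act {L A} sigma S _.

(* Main.v *)
Require Import Defs.
From HB Require Import structures.
From mathcomp Require Import all_boot all_order all_algebra all_field.
From Stdlib Require Import FunctionalExtensionality.
Import GRing.Theory.
Local Open Scope ring_scope.

Section Aux.
Variable L : fieldType.

Lemma sum_tuple_collapse (A : finType) (d dinv : A -> A)
  (dK : cancel d dinv) (Kd : cancel dinv d) n (v : n.-tuple A) (f : seq A -> L) :
  \sum_(u : n.-tuple A) f u * \prod_(i < n) ((d (tnth u i) == tnth v i) : nat)%:R
  = f (map dinv v).
Proof.
rewrite (bigD1 (map_tuple dinv v)) //=.
rewrite [X in _ * X]big1 ?mulr1; last by move=> i _; rewrite tnth_map Kd eqxx.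
rewrite [X in _ + X]big1 ?addr0 //.
move=> u neq.
have [i Hi] : exists i, tnth u i != tnth (map_tuple dinv v) i.
  apply/existsP; rewrite -negb_forall; apply: contra neq => /forallP H.
  by apply/eqP/eq_from_tnth => i; apply/eqP.
rewrite (bigD1 i) //=.
have -> : (d (tnth u i) == tnth v i) = false.
  apply/negbTE; apply: contra Hi; rewrite tnth_map => /eqP <-; by rewrite dK.
by rewrite mul0r mulr0.
Qed.

Lemma subst_tuple (A B : finType) f M (S : series L A) n (u : n.-tuple B) :
  subst_series L A B f M S u =
  \sum_(w : n.-tuple A) f (S w) * \prod_(i < n) M (tnth w i) (tnth u i).
Proof.
case: u => s Hs; have E := eqP Hs; subst n.
rewrite /subst_series.
by have -> : Tuple Hs = in_tuple s by apply: val_inj.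
Qed.

End Aux.

Section ZN.
Variable N : nat.
Hypothesis hN : (2 < N)%N.

Lemma N1 : (1 < N)%N. Proof. by apply: ltn_trans hN. Qed.

Lemma valZ_lt (x : 'Z_N) : (val x < N)%N.
Proof. have := ltn_ord x; change (val x) with (nat_of_ord x); move: (nat_of_ord x) => m; by rewrite Zp_cast // N1. Qed.

Lemma valZ_mul (x y : 'Z_N) : val (x * y) = ((val x * val y) %% N)%N.
Proof. rewrite /=; congr (_ %% _)%N; exact: Zp_cast N1. Qed.

Lemma valZ_nat m : val (m%:R : 'Z_N) = (m %% N)%N.
Proof. exact: val_Zp_nat N1 m. Qed.

Lemma iota_mod (a : 'Z_N) : (iota_inv N a %% N = val a %% N)%N.
Proof.
rewrite /iota_inv; case: eqP => // ->; by rewrite modnn mod0n.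
Qed.

Lemma iota_R (a : 'Z_N) : ((iota_inv N a)%:R : 'Z_N) = a.
Proof.
apply: val_inj; rewrite valZ_nat iota_mod modn_small //; exact: valZ_lt.
Qed.

Variable L : fieldType.
Variable z : L.
Hypothesis hz : N.-primitive_root z.

Lemma zmod e1 e2 : (e1 %% N = e2 %% N)%N -> z ^+ e1 = z ^+ e2.
Proof. by move=> E; apply/eqP; rewrite (eq_prim_root_expr hz); apply/eqP. Qed.

Lemma Fmx_some al j :
  F_mx L N z (Some al) (Some j) = (z ^+ (val j * val al))^-1.
Proof.
rewrite /F_mx (bigD1_seq (iota_inv N j)) /=; last first.
- exact: iota_uniq.
- rewrite mem_index_iota /iota_inv; have := valZ_lt j.
  case: eqP => H1 H2 /=; first by rewrite ltnSn andbT; apply: ltn_trans hN.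
  by rewrite lt0n ltnS (ltnW H2) andbT; apply/eqP.
rewrite iota_R eqxx mulr1 big1_seq ?addr0.
  congr (_^-1); apply: zmod.
  by rewrite -modnMm iota_mod iota_mod modnMm.
move=> m /andP [Hm]; rewrite mem_index_iota => /andP [m1 mN].
case: eqP; last by rewrite mulr0.
move=> [] Ej; exfalso; move/eqP: Hm; apply.
have Ev : val j = (m %% N)%N by rewrite Ej valZ_nat.
rewrite /iota_inv Ev; case: (ltngtP m N) => [lt|gt|->].
- rewrite modn_small //; case: eqP => // m0; by rewrite m0 in m1.
- by rewrite ltnS leqNgt gt in mN.
- by rewrite modnn eqxx.
Qed.

Lemma Fmx_none al : F_mx L N z (Some al) None = 0.
Proof. by rewrite /F_mx big1 // => m _; rewrite mulr0. Qed.

End ZN.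

Theorem lemma3p13 (N : nat) (hN : (3 <= N)%N)
  (L : fieldExtType rat) (z : L)
  (hz : N.-primitive_root z) (hgen : <<1%VS; z>>%VS = fullv)
  (sigma : 'End(L)) (hsigma : kAut 1%VS fullv sigma)
  (k : nat) (hk1 : (1 <= k < N)%N) (hkN : coprime k N)
  (hsk : sigma z = z ^+ k) :
  (forall S : series L (letXt N),
     Fmap z (coef_act sigma S) = Delta N k sigma (Fmap z S)) /\
  (forall S : series L (letXt N),
     Fmap z (Deltat N k sigma S) = coef_act sigma (Fmap z S)).
Proof.
have hN2 : (2 < N)%N by [].
have hom : kHom 1 fullv sigma by case/andP: hsigma.
have [idK fM'] := kHomP_tmp hom.
have fM : forall x y, sigma (x * y) = sigma x * sigma y.
  by move=> x y; apply: fM'; rewrite memvf.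
have s1 : sigma 1 = 1 by apply: idK; rewrite mem1v.
have sV : forall x, sigma x^-1 = (sigma x)^-1.
  by move=> x; apply: (kHom_inv hom); rewrite memvf.
have sX : forall x n, sigma (x ^+ n) = sigma x ^+ n.
  move=> x; elim=> [|n IH]; first by rewrite !expr0; exact: s1.
  by rewrite !exprS fM IH.
have sN : forall n, sigma n%:R = n%:R.
  move=> n; rewrite (raddfMn sigma); congr (_ *+ _); exact: s1.
have sS : forall (I : Type) (r : seq I) (F : I -> L),
    sigma (\sum_(i <- r) F i) = \sum_(i <- r) sigma (F i).
  by move=> I r F; rewrite linear_sum.
have sP : forall (I : Type) (r : seq I) (F : I -> L),
    sigma (\prod_(i <- r) F i) = \prod_(i <- r) sigma (F i).
  by move=> I r F; apply: (big_morph _ fM s1).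
have ku : (k%:R : 'Z_N) \is a GRing.unit by rewrite unitZpE 1?coprime_sym // N1.
pose dinv (a : letX N) : letX N :=
  match a with None => None | Some j => Some ((k%:R : 'Z_N)^-1 * j) end.
have dK : cancel (delta_k N k) dinv by case=> //= j; rewrite mulKr.
have Kd : cancel dinv (delta_k N k) by case=> //= j; rewrite mulVKr.
have expk : forall j al : 'Z_N,
    z ^+ (k * (val j * val al)) = z ^+ (val (k%:R * j) * val al).
  move=> j al; apply: (@zmod N L z hz); rewrite valZ_mul // valZ_nat //.
  by rewrite modnMml -mulnA modnMml.
have expk2 : forall j al : 'Z_N,
    z ^+ (k * (val j * val al)) = z ^+ (val j * val (k%:R * al)).
  move=> j al; apply: (@zmod N L z hz); rewrite valZ_mul // valZ_nat //.
  by rewrite modnMml modnMmr mulnCA.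
have keyA : forall a b, sigma (F_mx L N z a b) = F_mx L N z a (delta_k N k b).
  case=> [al|] [j|].
  - by rewrite !Fmx_some // sV sX hsk -exprM expk.
  - by rewrite !Fmx_none // linear0.
  - by rewrite /= sN.
  - by rewrite /= sN.
have keyB : forall a b, F_mx L N z (deltat_k N k a) b = sigma (F_mx L N z a b).
  case=> [al|] [j|].
  - by rewrite !Fmx_some // sV sX hsk -exprM expk2.
  - by rewrite !Fmx_none // linear0.
  - by rewrite /= sN.
  - by rewrite /= sN.
split=> S; apply: functional_extensionality => v.
- rewrite /Delta /subst_series /letter_mx.
  rewrite (@sum_tuple_collapse _ _ _ _ dK Kd _ _ (fun u : seq (letX N) => sigma (Fmap z S u))).
  rewrite /Fmap (@subst_tuple _ _ _ _ _ _ _ (map_tuple dinv (in_tuple v))).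
  rewrite sS /coef_act /subst_series; apply: eq_bigr => w _.
  rewrite fM sP; congr (_ * _); apply: eq_bigr => i _.
  by rewrite keyA tnth_map Kd.
- have dKt : cancel (deltat_k N k) dinv by case=> //= j; rewrite mulKr.
  have Kdt : cancel dinv (deltat_k N k) by case=> //= j; rewrite mulVKr.
  have hinj : injective (map_tuple (deltat_k N k) : (size v).-tuple _ -> _).
    move=> x y /(congr1 val) /= /(inj_map (can_inj dKt)) E; exact: val_inj.
  rewrite /Fmap /coef_act /subst_series sS (reindex_inj hinj).
  apply: eq_bigr => u _.
  rewrite /Deltat (@subst_tuple _ _ _ _ _ _ _ (map_tuple (deltat_k N k) u)).
  rewrite (@sum_tuple_collapse _ _ _ _ dKt Kdt _ _ (fun w : seq (letXt N) => sigma (S w))).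
  rewrite /= (mapK dKt) fM sP; congr (_ * _); apply: eq_bigr => i _.
  by rewrite tnth_map keyB.
Qed.
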